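(* Let $L$ be an almost abelian Lie algebra of dimension $n$ over a field $F$. Then there exists a Lie algebra $H$ over $F$ with $H^2\cong L$ if and only if the characteristic of $F$ divides $n-1$ (where, for characteristic $0$, this means $n-1=0$).
   Context: A Lie algebra $L$ is almost abelian if $L=Fx\dotplus A$ (vector space direct sum) where $A$ is an abelian ideal of $L$ and $\mathrm{ad}\,x$ acts as the identity map on $A$, i.e. $[x,a]=a$ for all $a\in A$. $H^2=[H,H]$ denotes the derived algebra. *)

(* Defs.v *)
From HB Require Import structures.
From mathcomp Require Import all_boot all_order all_algebra.
Set Implicit Arguments. Unset Strict Implicit. Unset Printing Implicit Defensive.
Import GRing.Theory.
Local Open Scope ring_scope.

Definition lie_algebra (F : fieldType) (V : vectType F) (br : V -> V -> V) :=
  [/\ (forall (a : F) (x y z : V), br (a *: x + y) z = a *: br x z + br y z),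
      (forall (a : F) (x y z : V), br z (a *: x + y) = a *: br z x + br z y),
      (forall x : V, br x x = 0) &
      (forall x y z : V, br x (br y z) + br y (br z x) + br z (br x y) = 0)].

Definition in_derived (F : fieldType) (V : vectType F) (br : V -> V -> V) (v : V) :=
  exists s : seq (F * V * V), v = \sum_(t <- s) t.1.1 *: br t.1.2 t.2.

Definition almost_abelian (F : fieldType) (L : vectType F) (br : L -> L -> L) :=
  exists (x : L) (A : {vspace L}),
    [/\ x \notin A, (<[x]> + A)%VS = fullv,
        (forall a b, a \in A -> b \in A -> br a b = 0),
        (forall y a, a \in A -> br y a \in A) &
        (forall a, a \in A -> br x a = a)].

Definition derived_iso (F : fieldType) (H L : vectType F)
    (brH : H -> H -> H) (brL : L -> L -> L) :=
  exists f : L -> H,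
    [/\ (forall (a : F) (x y : L), f (a *: x + y) = a *: f x + f y),
        injective f,
        (forall v : H, in_derived brH v <-> exists x, v = f x) &
        (forall x y : L, f (brL x y) = brH (f x) (f y))].

Definition char_divides (F : fieldType) (m : nat) :=
  (exists2 p, p \in [pchar F] & (p %| m)%N) \/
  ((forall p, p \notin [pchar F]) /\ m = 0%N).

(* Main.v *)
Require Import Defs.
From HB Require Import structures.
From mathcomp Require Import all_boot all_order all_algebra.
From mathcomp Require Import ring.
Set Implicit Arguments. Unset Strict Implicit. Unset Printing Implicit Defensive.
Import GRing.Theory.
Local Open Scope ring_scope.

Section Lin.
Variables (F : fieldType) (U V : lmodType F).
Definition lin (f : U -> V) := forall a u v, f (a *: u + v) = a *: f u + f v.
Variable f : U -> V.
Hypothesis hf : lin f.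
Lemma lin0 : f 0 = 0.
Proof. have := hf 1 0 0; rewrite scaler0 addr0 scale1r => /esym /eqP; rewrite -subr_eq0 addrK => /eqP; by []. Qed.
Lemma linD u v : f (u + v) = f u + f v.
Proof. by have := hf 1 u v; rewrite !scale1r. Qed.
Lemma linZ a u : f (a *: u) = a *: f u.
Proof. by have := hf a u 0; rewrite !addr0 lin0 addr0. Qed.
Lemma linN u : f (- u) = - f u.
Proof. by rewrite -scaleN1r linZ scaleN1r. Qed.
Lemma linB u v : f (u - v) = f u - f v.
Proof. by rewrite linD linN. Qed.
Lemma lin_sum (I : Type) (r : seq I) (c : I -> F) (w : I -> U) :
  f (\sum_(t <- r) c t *: w t) = \sum_(t <- r) c t *: f (w t).
Proof.
elim: r => [|t r IH]; first by rewrite !big_nil lin0.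
by rewrite !big_cons hf IH.
Qed.
End Lin.

Section LieFacts.
Variables (F : fieldType) (V : vectType F) (br : V -> V -> V).
Hypothesis hL : lie_algebra br.
Lemma brl z : lin (fun u => br u z). Proof. by case: hL => h _ _ _ a u v; apply: h. Qed.
Lemma brr z : lin (br z). Proof. by case: hL => _ h _ _ a u v; apply: h. Qed.
Lemma bralt u : br u u = 0. Proof. by case: hL. Qed.
Lemma brjac u v w : br u (br v w) + br v (br w u) + br w (br u v) = 0. Proof. by case: hL. Qed.
Lemma branti u v : br u v = - br v u.
Proof.
have := bralt (u + v).
rewrite (linD (brl _)) !(linD (brr _)) !bralt add0r addr0 => /eqP.
by rewrite addr_eq0 => /eqP.
Qed.
End LieFacts.

Lemma coef_id_gen (F : fieldType) (M i : nat) : M%:R = 0 :> F -> (i <= M)%N ->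
  (if (0 < i < M)%N then i%:R else 0) - (if (1 < i <= M)%N then (i.-1)%:R else 0)
  = (i != 0)%:R :> F.
Proof.
move=> hM im.
case: i im => [|[|j]] im /=; first by rewrite subr0.
  rewrite subr0; case: ltnP => // h.
  have e : M = 1%N by apply/eqP; rewrite eqn_leq im h.
  by subst M; move: hM => /= ->.
rewrite im; case: ltnP => h.
  by rewrite mulrS addrK.
have e : M = j.+2 by apply/eqP; rewrite eqn_leq im h.
subst M; move: hM; rewrite mulrS => hM'.
by rewrite sub0r; apply/eqP; rewrite eq_sym -addr_eq0 hM'.
Qed.

Lemma addACA4 (V : zmodType) (a1 a2 b1 b2 c1 c2 d1 d2 : V) :
  (a1 + a2) + (b1 + b2) - (c1 + c2) + (d1 + d2) = (a1 + b1 - c1 + d1) + (a2 + b2 - c2 + d2).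
Proof.
rewrite opprD (@GRing.add V).[AC (((2*2)*2)*2) ((1*3*5*7)*(2*4*6*8))]. by [].
Qed.

Lemma scaler4 (F : fieldType) (V : lmodType F) (a : F) (b d e c : V) :
  a *: (b + d - e + c) = a *: b + a *: d - a *: e + a *: c.
Proof. by rewrite !scalerDr scalerN. Qed.

Lemma lin4 (F : fieldType) (U V : lmodType F) (f : U -> V) : lin f ->
  forall b d e c x, f (b + d - e + c *: x) = f b + f d - f e + c *: f x.
Proof. by move=> hf b d e c x; rewrite !(linD hf) (linN hf) (linZ hf). Qed.

Lemma t1 (V : zmodType) (a b c d e f : V) : (a - b - c + d) + (e - d - a + f) + (c - f - e + b) = 0.
Proof.
rewrite (@GRing.add V).[AC ((4*4)*4) ((1*7)*(2*12)*(3*9)*(4*6)*(5*11)*(8*10))].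
by rewrite ?subrr ?addrN ?addNr ?addr0.
Qed.

Lemma t2 (V : zmodType) (a a' b b' c c' z1 z2 z3 : V) :
  a - a' = z3 -> b - b' = z1 -> c - c' = z2 ->
  (a - c' - z1) + (b - a' - z2) + (c - b' - z3) = 0.
Proof.
move=> ha hb hc.
rewrite -[a](subrK a') ha -[b](subrK b') hb -[c](subrK c') hc.
rewrite (@GRing.add V).[AC ((4*4)*4) ((1*12)*(2*7)*(3*10)*(4*5)*(6*11)*(8*9))].
by rewrite ?subrr ?addrN ?addNr ?addr0.
Qed.

Lemma gen_comm (F : fieldType) (V : lmodType F) (p1 p2 q1 q2 : F) (a b c d : V) :
  p1 *: (q1 *: a + q2 *: b) + p2 *: (q1 *: c + q2 *: d) -
  (q1 *: (p1 *: a + p2 *: b) + q2 *: (p1 *: c + p2 *: d)) =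
  (p1 * q2 - p2 * q1) *: (b - c).
Proof.
rewrite scalerBr !scalerBl !scalerDr !scalerA.
rewrite [q1 * p1]mulrC [q1 * p2]mulrC [q2 * p1]mulrC [q2 * p2]mulrC !opprD.
rewrite [LHS](@GRing.add V).[AC ((2*2)*(2*2)) (((1*5)*(4*8))*((2*6)*(7*3)))].
by rewrite !subrr !add0r opprK.
Qed.

Section Setup.
Variables (F : fieldType) (L : vectType F) (brL : L -> L -> L).
Hypothesis hL : lie_algebra brL.
Variables (x : L) (A : {vspace L}).
Hypotheses (xA : x \notin A) (xAf : (<[x]> + A)%VS = fullv)
  (AA : forall a b, a \in A -> b \in A -> brL a b = 0)
  (xa : forall a, a \in A -> brL x a = a).

Let m := \dim A.
Definition eb : m.+1.-tuple L := cons_tuple x (vbasis A).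

Lemma capxA : (<[x]> :&: A = 0)%VS.
Proof.
apply/eqP; rewrite -subv0; apply/subvP => y /memv_capP [/vlineP [k ->] ykA].
rewrite memv0; case: (eqVneq k 0) => [->|k0]; first by rewrite scale0r.
have := memvZ (k^-1) ykA; rewrite scalerA mulVf // scale1r => xA'.
by move: xA; rewrite xA'.
Qed.

Lemma x_neq0 : x != 0.
Proof. by apply: contraNneq xA => ->; rewrite mem0v. Qed.

Lemma eb_basis : basis_of fullv eb.
Proof.
rewrite -xAf; apply: (@cat_basis _ _ _ _ [:: x] (vbasis A)).
- by apply/directv_addP; exact: capxA.
- exact: seq1_basis x_neq0.
- exact: vbasisP.
Qed.

Lemma eb_free : free eb. Proof. exact: basis_free eb_basis. Qed.

Lemma eb0 : eb`_0 = x. Proof. by []. Qed.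

Lemma ebA i : (0 < i)%N -> eb`_i \in A.
Proof.
case: i => // i _ /=.
case: (ltnP i m) => [lt|ge].
  by apply: vbasis_mem; apply: mem_nth; rewrite size_tuple.
by rewrite nth_default ?size_tuple // mem0v.
Qed.

Lemma eb_span l : l = \sum_(i < m.+1) coord eb i l *: eb`_i.
Proof. exact: coord_basis eb_basis (memvf l). Qed.

Lemma coord_eb (i j : 'I_m.+1) : coord eb j eb`_i = (i == j)%:R.
Proof. exact: coord_free eb_free. Qed.

Lemma dim_full : \dim (fullv : {vspace L}) = m.+1.
Proof. exact: size_basis eb_basis. Qed.

Lemma lin_ext (f g : L -> L) : lin f -> lin g ->
  (forall i : 'I_m.+1, f eb`_i = g eb`_i) -> forall l, f l = g l.
Proof.
move=> hf hg feq l; rewrite (eb_span l) (lin_sum hf) (lin_sum hg).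
by apply: eq_bigr => i _; rewrite feq.
Qed.

Lemma brxe (i : 'I_m.+1) : brL x eb`_i = if i == 0 :> nat then 0 else eb`_i.
Proof.
case: i => [[|i]] Hi /=; first exact: bralt.
by apply: xa; apply: (ebA (i:=i.+1)).
Qed.

Definition tr (g : L -> L) := \sum_(i < m.+1) coord eb i (g eb`_i).

Lemma trC g h : lin g -> lin h -> tr (fun l => g (h l)) = tr (fun l => h (g l)).
Proof.
move=> hg hh; rewrite /tr.
transitivity (\sum_(i < m.+1) \sum_(j < m.+1) coord eb j (h eb`_i) * coord eb i (g eb`_j)).
  apply: eq_bigr => i _; rewrite {1}(eb_span (h eb`_i)) (lin_sum hg) linear_sum.
  by apply: eq_bigr => j _; rewrite linearZ.
rewrite exchange_big; apply: eq_bigr => j _.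
rewrite {2}(eb_span (g eb`_j)) (lin_sum hh) linear_sum.
by apply: eq_bigr => i _; rewrite linearZ /= mulrC.
Qed.

Lemma tr_adx : tr (brL x) = m%:R.
Proof.
rewrite /tr big_ord_recl brxe eqxx linear0 add0r.
under eq_bigr => i _ do rewrite brxe [_ == _]/= coord_eb eqxx.
by rewrite sumr_const card_ord.
Qed.

Lemma forward (H : vectType F) (brH : H -> H -> H) :
  lie_algebra brH -> derived_iso brH brL -> m%:R = 0 :> F.
Proof.
move=> hH [f [hf finj fder fbr]].
have ex : forall h l, exists y, brH h (f l) == f y.
  move=> h l; have [y ->] : exists y, brH h (f l) = f y.
    by apply/fder; exists [:: (1, h, f l)]; rewrite big_cons big_nil scale1r addr0.
  by exists y.
pose al h l := xchoose (ex h l).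
have alP : forall h l, brH h (f l) = f (al h l).
  by move=> h l; apply/eqP; exact: xchooseP (ex h l).
have allin : forall h, lin (al h).
  move=> h a u v; apply: finj; rewrite hf -!alP hf.
  by rewrite (brr hH).
have alcomm : forall h k l, al (brH h k) l = al h (al k l) - al k (al h l).
  move=> h k l; apply: finj; rewrite (linB hf) -!alP.
  have J := brjac hH h k (f l).
  rewrite (branti hH (f l) h) (branti hH (f l) (brH h k)) (linN (brr hH k)) in J.
  move/eqP: J; rewrite -subr_eq0 subr0 => /eqP J; apply/eqP.
  by rewrite eq_sym -subr_eq0 J.
have [s fx] := (fder (f x)).2 (ex_intro _ x erefl).
have adx : forall l, brL x l = \sum_(t <- s) t.1.1 *: (al t.1.2 (al t.2 l) - al t.2 (al t.1.2 l)).
  move=> l; apply: finj; rewrite fbr (lin_sum hf) fx (lin_sum (brl hH (f l))).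
  by apply: eq_bigr => t _; rewrite alP alcomm.
rewrite -tr_adx /tr.
under eq_bigr => i _ do rewrite adx linear_sum.
rewrite exchange_big big1 // => t _.
under eq_bigr => i _ do rewrite linearZ linearB.
rewrite -mulr_sumr sumrB.
have := trC (allin t.1.2) (allin t.2); rewrite /tr => ->.
by rewrite subrr mulr0.
Qed.

Lemma decomp l : exists c a, a \in A /\ l = c *: x + a.
Proof.
exists (coord eb 0 l), (\sum_(i < m) coord eb (lift ord0 i) l *: eb`_(lift ord0 i)).
split; last by rewrite {1}(eb_span l) big_ord_recl.
by apply: memv_suml => i _; apply: memvZ; apply: ebA.
Qed.

Lemma brdec c a c' a' : a \in A -> a' \in A ->
  brL (c *: x + a) (c' *: x + a') = c *: a' - c' *: a.
Proof.
move=> aA aA'.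
rewrite (brl hL) !(brr hL) bralt // scaler0 add0r xa // (AA aA aA') addr0.
by rewrite (branti hL a x) xa // scalerN.
Qed.

Lemma deriv (D : L -> L) : lin D -> D x = 0 -> (forall l, D l \in A) ->
  forall u v, D (brL u v) = brL (D u) v + brL u (D v).
Proof.
move=> hD Dx DA u v.
have [c [a [aA ->]]] := decomp u; have [c' [a' [aA' ->]]] := decomp v.
rewrite brdec // (linB hD) !(linZ hD) !hD Dx !scaler0 !add0r.
rewrite -[D a](add0r) -(scale0r x) brdec ?DA //.
rewrite -[D a'](add0r) -(scale0r x) brdec ?DA //.
by rewrite !scale0r !add0r subr0 [RHS]addrC.
Qed.

Definition ext (g : nat -> L) l := \sum_(i < m.+1) coord eb i l *: g i.

Lemma ext_lin g : lin (ext g).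
Proof.
move=> a u v; rewrite /ext scaler_sumr -big_split; apply: eq_bigr => i _.
by rewrite linearP /= scalerDl scalerA.
Qed.

Lemma ext_e g k : (k < m.+1)%N -> ext g eb`_k = g k.
Proof.
move=> hk; rewrite /ext (bigD1 (Ordinal hk)) //= big1 ?addr0.
  by rewrite (coord_eb (Ordinal hk)) eqxx scale1r.
by move=> i ne; rewrite (coord_eb (Ordinal hk)) eq_sym (negbTE ne) scale0r.
Qed.

Definition dT (k : nat) : L := if (0 < k < m)%N then eb`_k.+1 else 0.
Definition dD (k : nat) : L := if (1 < k <= m)%N then (k.-1)%:R *: eb`_k.-1 else 0.
Definition Tm := ext dT.
Definition Dm := ext dD.

Lemma ext_A g : (forall k, g k \in A) -> forall l, ext g l \in A.
Proof. by move=> gA l; apply: memv_suml => i _; apply: memvZ. Qed.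

Lemma dT_A k : dT k \in A.
Proof. by rewrite /dT; case: ifP => _; [apply: ebA | apply: mem0v]. Qed.
Lemma dD_A k : dD k \in A.
Proof.
rewrite /dD; case: ifP => [/andP [h _]|_]; last exact: mem0v.
by apply: memvZ; apply: ebA; case: k h => [|[|k]].
Qed.

Lemma Tx : Tm x = 0. Proof. by rewrite -eb0 /Tm ext_e. Qed.
Lemma Dx : Dm x = 0. Proof. by rewrite -eb0 /Dm ext_e. Qed.

Hypothesis hm : m%:R = 0 :> F.

Lemma coef_id i : (i <= m)%N ->
  (if (0 < i < m)%N then i%:R else 0) - (if (1 < i <= m)%N then (i.-1)%:R else 0)
  = (i != 0)%:R :> F.
Proof. exact: coef_id_gen hm. Qed.

Lemma DTe (i : 'I_m.+1) : Dm (Tm eb`_i) - Tm (Dm eb`_i) = brL x eb`_i.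
Proof.
have im : (i <= m)%N by rewrite -ltnS.
have -> : Dm (Tm eb`_i) = (if (0 < i < m)%N then (i : nat)%:R else 0) *: eb`_i.
  rewrite /Tm ext_e // /dT; case: ifP => [/andP [h0 h]|_]; last by rewrite /Dm (lin0 (ext_lin _)) scale0r.
  by rewrite /Dm ext_e ?ltnS // /dD ltnS h0 h.
have -> : Tm (Dm eb`_i) = (if (1 < i <= m)%N then (i.-1 : nat)%:R else 0) *: eb`_i.
  rewrite /Dm ext_e // /dD; case: ifP => [/andP [h1 h2]|_]; last by rewrite /Tm (lin0 (ext_lin _)) scale0r.
  rewrite /Tm (linZ (ext_lin _)) ext_e; last by rewrite ltnS (leq_trans (leq_pred _)).
  rewrite /dT; case: i h1 h2 {im} => [[|[|i]] ] //= _ _ h2; by rewrite h2.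
rewrite -scalerBl coef_id // brxe.
by case: (i : nat) => [|k]; rewrite ?scale0r ?scale1r.
Qed.

Lemma DT l : Dm (Tm l) - Tm (Dm l) = brL x l.
Proof.
apply: (lin_ext (f := fun l => Dm (Tm l) - Tm (Dm l)) (g := brL x)); last exact: DTe.
  move=> a u v; rewrite /Dm /Tm (ext_lin dT a u v) (ext_lin dD a u v) (ext_lin dD a) (ext_lin dT a).
  by rewrite scalerBr opprD addrACA.
exact: (brr hL x).
Qed.

Lemma Dlin : lin Dm. Proof. exact: ext_lin. Qed.
Lemma Tlin : lin Tm. Proof. exact: ext_lin. Qed.
Lemma Dder u v : Dm (brL u v) = brL (Dm u) v + brL u (Dm v).
Proof. exact: (deriv Dlin Dx (ext_A dD_A)). Qed.
Lemma Tder u v : Tm (brL u v) = brL (Tm u) v + brL u (Tm v).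
Proof. exact: (deriv Tlin Tx (ext_A dT_A)). Qed.

Definition Hs := (L * (F^o * F^o))%type.
Definition del (p : F^o * F^o) l := (p.1 : F) *: Dm l + (p.2 : F) *: Tm l.
Definition cc (p q : F^o * F^o) : F := p.1 * q.2 - p.2 * q.1.
Definition brH (X Y : Hs) : Hs :=
  (brL X.1 Y.1 + del X.2 Y.1 - del Y.2 X.1 + cc X.2 Y.2 *: x, 0).

Lemma del_lin p : lin (del p).
Proof.
move=> a u v; rewrite /del (Dlin a) (Tlin a) !scalerDr !scalerA.
by rewrite [_ * a]mulrC [(p.2 : F) * a]mulrC addrACA.
Qed.

Lemma del_der p u v : del p (brL u v) = brL (del p u) v + brL u (del p v).
Proof.
rewrite /del Dder Tder !scalerDr.
rewrite (linD (brl hL v)) (linD (brr hL u)) !(linZ (brl hL v)) !(linZ (brr hL u)).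
by rewrite addrACA.
Qed.

Lemma del_x p : del p x = 0.
Proof. by rewrite /del Dx Tx !scaler0 addr0. Qed.

Lemma delp0 p : del p 0 = 0.
Proof. by rewrite /del (lin0 Dlin) (lin0 Tlin) !scaler0 addr0. Qed.

Lemma del0 l : del 0 l = 0.
Proof. by rewrite /del !scale0r addr0. Qed.

Lemma del_lp a p q l : del (a *: p + q) l = a *: del p l + del q l.
Proof.
rewrite /del /= !scalerDl -!scalerA scalerDr.
by rewrite addrACA.
Qed.

Lemma del_comm p q l : del p (del q l) - del q (del p l) = cc p q *: brL x l.
Proof.
rewrite -DT /del /cc.
rewrite !(linD Dlin) !(linD Tlin) !(linZ Dlin) !(linZ Tlin).
exact: gen_comm.
Qed.

Lemma pairP (X Y : Hs) : X.1 = Y.1 -> X.2 = Y.2 -> X = Y.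
Proof. by case: X => [? ?]; case: Y => [? ?] /= -> ->. Qed.

Lemma ccl a (p q r : F^o * F^o) : cc (a *: p + q) r = a * cc p r + cc q r.
Proof.
case: p q r => [p1 p2] [q1 q2] [r1 r2]; rewrite /cc /=.
rewrite -[a *: p1]/(a * (p1 : F)) -[a *: p2]/(a * (p2 : F)).
move: (p1 : F) (p2 : F) (q1 : F) (q2 : F) (r1 : F) (r2 : F) => ? ? ? ? ? ?. ring.
Qed.
Lemma ccr a (p q r : F^o * F^o) : cc r (a *: p + q) = a * cc r p + cc r q.
Proof.
case: p q r => [p1 p2] [q1 q2] [r1 r2]; rewrite /cc /=.
rewrite -[a *: p1]/(a * (p1 : F)) -[a *: p2]/(a * (p2 : F)).
move: (p1 : F) (p2 : F) (q1 : F) (q2 : F) (r1 : F) (r2 : F) => ? ? ? ? ? ?. ring.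
Qed.
Lemma ccpp p : cc p p = 0.
Proof. by rewrite /cc mulrC subrr. Qed.
Lemma ccp0 p : cc p 0 = 0.
Proof. by rewrite /cc /= !mulr0 subrr. Qed.

Lemma brH_l a (X Y Z : Hs) : brH (a *: X + Y) Z = a *: brH X Z + brH Y Z.
Proof.
apply: pairP; last by rewrite /= scaler0 addr0.
rewrite /brH /= (brl hL) del_lp (del_lin _ a) ccl scalerDl -scalerA.
by rewrite scaler4 addACA4.
Qed.

Lemma brH_r a (X Y Z : Hs) : brH Z (a *: X + Y) = a *: brH Z X + brH Z Y.
Proof.
apply: pairP; last by rewrite /= scaler0 addr0.
rewrite /brH /= (brr hL) del_lp (del_lin _ a) ccr scalerDl -scalerA.
by rewrite scaler4 addACA4.
Qed.

Lemma brH_alt (X : Hs) : brH X X = 0.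
Proof.
apply: pairP => //; rewrite /brH /= bralt // add0r subrr ccpp scale0r addr0.
by [].
Qed.


Lemma jac1 (X Y Z : Hs) : (brH X (brH Y Z)).1 =
  brL X.1 (brL Y.1 Z.1) +
  (brL X.1 (del Y.2 Z.1) - brL X.1 (del Z.2 Y.1) - brL Z.1 (del X.2 Y.1) + brL Y.1 (del X.2 Z.1)) +
  (del X.2 (del Y.2 Z.1) - del X.2 (del Z.2 Y.1) - cc Y.2 Z.2 *: brL x X.1).
Proof.
rewrite {1}/brH /= del0 ccp0 scale0r subr0 addr0.
rewrite (lin4 (brr hL X.1)) (lin4 (del_lin X.2)) del_x scaler0 addr0 del_der.
rewrite (branti hL X.1 x) (branti hL (del X.2 Y.1) Z.1) scalerN.
by rewrite [LHS](@GRing.add L).[AC (4*4) ((1*(2*3*5*6))*(7*8*4))].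
Qed.

Lemma brH_jac (X Y Z : Hs) : brH X (brH Y Z) + brH Y (brH Z X) + brH Z (brH X Y) = 0.
Proof.
apply: pairP; last by rewrite /= !addr0.
have E : forall u v : Hs, (u + v).1 = u.1 + v.1 by [].
rewrite !E !jac1.
rewrite [LHS](@GRing.add L).[AC ((((1*4)*3)*((1*4)*3))*((1*4)*3))
   (((1*9*17) * ((2*3*4*5)*(10*11*12*13)*(18*19*20*21))) * ((6*7*8)*(14*15*16)*(22*23*24)))].
rewrite (brjac hL) t1 (t2 (del_comm X.2 Y.2 Z.1) (del_comm Y.2 Z.2 X.1) (del_comm Z.2 X.2 Y.1)).
by rewrite !addr0.
Qed.

Lemma H_lie : lie_algebra brH.
Proof.
split; [exact: brH_l | exact: brH_r | exact: brH_alt | exact: brH_jac].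
Qed.

Definition fH (l : L) : Hs := (l, 0).

Lemma fH_derived : derived_iso brH brL.
Proof.
exists fH; split.
- by move=> a u v; apply: pairP; rewrite /= ?scaler0 ?addr0.
- by move=> u v [].
- move=> v; split.
    move=> [s ->].
    have E2 : (\sum_(t <- s) t.1.1 *: brH t.1.2 t.2).2 = 0.
      elim: s => [|t s IH]; first by rewrite big_nil.
      by rewrite big_cons [(_ + _).2]/= IH /= scaler0 addr0.
    exists (\sum_(t <- s) t.1.1 *: brH t.1.2 t.2).1.
    by apply: pairP; rewrite // E2.
  move=> [y ->]; have [c [a [aA ->]]] := decomp y.
  pose u0 : Hs := (0, ((1 : F^o), (0 : F^o))).
  pose v0 : Hs := (0, ((0 : F^o), (1 : F^o))).
  exists [:: (c, u0, v0); (1, fH x, fH a)].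
  rewrite big_cons big_cons big_nil addr0 scale1r.
  apply: pairP; last by rewrite /= scaler0 addr0.
  rewrite /= bralt // !delp0 add0r subr0 /cc /= mulr1 mulr0 subr0 scale1r.
  by rewrite xa // !del0 ?add0r ?subr0 ?oppr0 ?scale0r ?addr0.
- move=> u v; apply: pairP => //.
  by rewrite /= !del0 ?subr0 ?addr0 ?ccp0 ?scale0r ?addr0.
Qed.

Lemma backward : exists (H : vectType F) (brH : H -> H -> H),
  lie_algebra brH /\ derived_iso brH brL.
Proof. by exists Hs, brH; split; [exact: H_lie | exact: fH_derived]. Qed.
End Setup.

From Stdlib Require Import Classical.
Unset Implicit Arguments. Set Strict Implicit.

Theorem corollary2p3 (F : fieldType) (L : vectType F) (brL : L -> L -> L) (n : nat) :
  lie_algebra brL -> almost_abelian brL -> \dim (fullv : {vspace L}) = n ->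
  ((exists (H : vectType F) (brH : H -> H -> H),
      lie_algebra brH /\ derived_iso brH brL)
   <-> char_divides F (n - 1)%N).
Proof.
move=> hL [x [A [xA xAf AA Aid xa]]] hn.
have nE : (n - 1)%N = \dim A by rewrite -hn (dim_full xA xAf) subn1.
rewrite nE; split.
- move=> [H [brH [hH hd]]]; have hm := forward hL xA xAf xa hH hd.
  case: (posnP (\dim A)) => [d0|dpos].
    rewrite /char_divides d0.
    case: (classic (exists p, p \in [pchar F])) => [[p hp]|np].
      by left; exists p.
    right; split => // p; apply/negP => hp; apply: np; by exists p.
  have [p hp] := natf0_pchar dpos (introT eqP hm).
  by left; exists p => //; rewrite (dvdn_pcharf hp) hm.
- move=> hc; apply: (backward hL xA xAf AA xa).
  case: hc => [[p hp hd]|[_ ->]] //.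
  by apply/eqP; rewrite -(dvdn_pcharf hp).
Qed.
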